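(* Let $k$ be a real number. For every $s\in\mathbb{C}$ with $\mathrm{Re}(s)>\max(1,1+k)$, $$\sum_{n\geq1}\frac{\Omega(n)\beta_k(n)}{n^s}=\zeta(s)P(s-k)\bigl(P_\Omega(s)+1\bigr).$$
   Context: $\Omega(n)$ is the number of prime factors of $n$ counted with multiplicity; $\beta_k(n)=\sum_{p\mid n}p^k$ (sum over distinct primes dividing $n$). $\zeta(s)=\sum_{n\geq1}n^{-s}$ is the Riemann zeta function, $P(s)=\sum_p p^{-s}$ is the prime zeta function, and $P_\Omega(s)=\sum_p\frac{\Omega(p)}{p^s-1}=\sum_p\frac1{p^s-1}$, sums over all primes $p$. *)

(* Defs.v *)
From Stdlib Require Import Reals.
From Coquelicot Require Import Coquelicot.
From mathcomp Require Import ssreflect ssrbool ssrnat seq prime bigop.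

Definition Omega (n : nat) : nat := (\sum_(p <- primes n) logn p n)%N.

Definition beta (k : R) (n : nat) : R :=
  \big[Rplus/0%R]_(p <- primes n) Rpower (INR p) k.

(* Complex power x^s = exp(s ln x) for real x > 0 and complex s. *)
Definition cpow (x : R) (s : C) : C :=
  (exp (Re s * ln x) * cos (Im s * ln x),
   exp (Re s * ln x) * sin (Im s * ln x))%R.

(* Terms of the Dirichlet series (index shifted: term n is for n+1). *)
Definition zeta_term (s : C) (n : nat) : C := cpow (INR n.+1) (- s)%C.

Definition primezeta_term (s : C) (n : nat) : C :=
  if prime n then cpow (INR n) (- s)%C else 0%C.

(* P_Omega(s) = sum_p Omega(p)/(p^s - 1) = sum_p 1/(p^s - 1). *)
Definition POmega_term (s : C) (n : nat) : C :=
  if prime n then (INR (Omega n) / (cpow (INR n) s - 1))%C else 0%C.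

Definition lhs_term (k : R) (s : C) (n : nat) : C :=
  (RtoC (INR (Omega n.+1) * beta k n.+1) * cpow (INR n.+1) (- s))%C.

(* Main.v *)
Require Import Defs.
From Stdlib Require Import Reals Lra Lia.
From Coquelicot Require Import Coquelicot.
From HB Require Import structures.
From mathcomp Require Import ssreflect ssrfun ssrbool eqtype ssrnat seq div fintype prime bigop.
From mathcomp Require Import zify.
Set Warnings "-notation-overridden -redundant-canonical-projection -ambiguous-paths".


HB.instance Definition _ := Monoid.isComLaw.Build R 0%R Rplus
  (fun x y z => esym (Rplus_assoc x y z)) Rplus_comm Rplus_0_l.

Section Comb.
Local Open Scope nat_scope.
Definition ppN (m : nat) : nat :=
  \sum_(p < m.+1 | prime p) \sum_(j < m.+1) (m == p ^ j.+1).

Lemma pow_gt (p j : nat) : prime p -> j.+1 < p ^ j.+1.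
Proof. move=> pp; apply: ltn_expl; exact: prime_gt1. Qed.

Lemma pow_ge (p j : nat) : prime p -> p <= p ^ j.+1.
Proof.
move=> pp; rewrite expnS; apply: leq_pmulr; rewrite expn_gt0; apply/orP; left; exact: prime_gt0.
Qed.

Lemma widen0 (n m : nat) (F : nat -> nat) : n <= m ->
  (forall i, n <= i -> i < m -> F i = 0) -> \sum_(i < n) F i = \sum_(i < m) F i.
Proof.
move=> nm H; rewrite (big_ord_widen m F nm) big_mkcond; apply: eq_bigr => i _.
case: ifP => // /negbT; rewrite -leqNgt => ni; by rewrite H.
Qed.

Lemma ppN_widen e M : e <= M ->
  ppN e = \sum_(p < M.+1 | prime p) \sum_(j < M.+1) (e == p ^ j.+1).
Proof.
move=> eM; rewrite /ppN !big_mkcond /=.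
transitivity (\sum_(p < e.+1) (if prime p then \sum_(j < M.+1) (e == p ^ j.+1) else 0)).
  apply: eq_bigr => p _; case: ifP => // pp.
  have W := (@widen0 e.+1 M.+1 (fun j => nat_of_bool (e == p ^ j.+1)) eM).
  rewrite -W // => j ej _.
  have := pow_gt p j pp; case: eqP => // E; rewrite -E ltnNge => /negP; case.
  lia.
have W := (@widen0 e.+1 M.+1 (fun p => if prime p then \sum_(j < M.+1) (e == p ^ j.+1) else 0) eM).
rewrite [RHS]big_mkcond -W // => p ep _.
case: ifP => // pp; apply: big1 => j _.
have := pow_ge p j pp; case: eqP => // E; rewrite -E leqNgt => /negP; case.
lia.
Qed.

Lemma divcount (m e : nat) : 0 < m -> 0 < e ->
  \sum_(d < m.+1 | d %| m) (m %/ d == e) = (e %| m).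
Proof.
move=> m0 e0; case: (boolP (e %| m)) => he.
- have dm : m %/ e < m.+1 by rewrite ltnS leq_div.
  have me0 : 0 < m %/ e by rewrite divn_gt0 // dvdn_leq.
  have dvd : m %/ e %| m by rewrite -{2}(divnK he) dvdn_mulr.
  rewrite (bigD1 (Ordinal dm)) /=; last by [].
  rewrite big1 ?addn0.
    by rewrite -{1}(divnK he) mulKn // eqxx.
  move=> d /andP [dd dne]; apply/eqP; rewrite eqb0; apply/negP => /eqP E.
  move/negP: dne; apply; apply/eqP; apply: val_inj => /=.
  by rewrite -E -{2}(divnK dd) mulKn // E.
- apply: big1 => d dd; apply/eqP; rewrite eqb0; apply/negP => /eqP E.
  by move/negP: he; apply; rewrite -E; apply: dvdn_div.
Qed.

Lemma sum_lt (N L : nat) : \sum_(j < N) (j < L) = minn L N.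
Proof.
elim: N => [|N IH]; first by rewrite big_ord0 minn0.
rewrite big_ord_recr /= IH.
case: (ltnP N L) => h /=; lia.
Qed.

Lemma countdiv p m : prime p -> 0 < m -> \sum_(j < m.+1) (p ^ j.+1 %| m) = logn p m.
Proof.
move=> pp m0.
rewrite (eq_bigr (fun j : 'I_m.+1 => nat_of_bool (j < logn p m))); last first.
  by move=> j _; rewrite pfactor_dvdn.
rewrite sum_lt; apply/minn_idPl.
have h1 := pfactor_dvdnn p m.
have h2 := dvdn_leq m0 h1.
have h3 : logn p m < p ^ logn p m by apply: ltn_expl; exact: prime_gt1.
lia.
Qed.

Lemma primes_perm n B : 0 < n -> n <= B ->
  perm_eq (primes n) [seq i <- iota 0 B.+1 | i \in primes n].
Proof.
move=> n0 nB; apply: uniq_perm.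
- exact: primes_uniq.
- by apply: filter_uniq; apply: iota_uniq.
move=> i; rewrite mem_filter mem_iota; case: (boolP (i \in primes n)) => //= ip.
rewrite mem_primes in ip; case/and3P: ip => _ _ idn.
have := dvdn_leq n0 idn; lia.
Qed.

Lemma Omega_B n B : 0 < n -> n <= B -> Omega n = \sum_(p < B.+1 | prime p) logn p n.
Proof.
move=> n0 nB; rewrite /Omega (perm_big _ (primes_perm _ _ n0 nB)) big_filter -(big_mkord (fun p => prime p) (fun p => logn p n)) /index_iota subn0.
rewrite big_mkcond [RHS]big_mkcond; apply: eq_bigr => i _.
case: (boolP (i \in primes n)) => ip.
  by move: (ip); rewrite mem_primes => /and3P [-> _ _].
case: (boolP (prime i)) => // pi.
by apply/esym/eqP; rewrite -leqn0 leqNgt logn_gt0.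
Qed.

Lemma Omega_prime_mul e n : prime e -> e %| n -> 0 < n -> Omega n = (Omega (n %/ e)).+1.
Proof.
move=> pe en n0.
have e0 : 0 < e by exact: prime_gt0.
have ne0 : 0 < n %/ e by rewrite divn_gt0 // dvdn_leq.
have en1 : e < n.+1 by rewrite ltnS dvdn_leq.
rewrite (Omega_B n n n0 (leqnn n)) (@Omega_B (n %/ e) n) //; last by apply: leq_div.
rewrite (eq_bigr (fun p : 'I_n.+1 => logn p (n %/ e) + nat_of_bool (nat_of_ord p == e))); last first.
  by move=> p _; have := lognM (nat_of_ord p) ne0 e0; rewrite divnK // (logn_prime _ pe) => ->.
have H1 : \sum_(i < n.+1 | prime i) nat_of_bool (nat_of_ord i == e) = 1.
  rewrite (bigD1 (Ordinal en1)) //= eqxx big1 // => i /andP [_ ine].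
  case: eqP => // E; move/negP: ine; case; apply/eqP; exact: val_inj.
by rewrite big_split /= H1 addn1.
Qed.

Lemma sum_ppN_div m : 0 < m -> \sum_(d < m.+1 | d %| m) ppN (m %/ d) = Omega m.
Proof.
move=> m0.
rewrite (eq_bigr (fun d : 'I_m.+1 => \sum_(p < m.+1 | prime p) \sum_(j < m.+1) (m %/ d == p ^ j.+1))); last first.
  by move=> d _; apply: ppN_widen; apply: leq_div.
rewrite exchange_big /= (Omega_B m m m0 (leqnn m)); apply: eq_bigr => p pp.
rewrite exchange_big /= -(countdiv _ _ pp m0); apply: eq_bigr => j _.
by rewrite divcount // expn_gt0 prime_gt0.
Qed.

Lemma sum_fcN m : 0 < m ->
  \sum_(d < m.+1 | d %| m) ((m %/ d == 1) + ppN (m %/ d)) = (Omega m).+1.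
Proof.
move=> m0; rewrite big_split /= sum_ppN_div // divcount // dvd1n add1n //.
Qed.

End Comb.

Local Open Scope R_scope.

Lemma cpow_mul (x y : R) (s : C) : 0 < x -> 0 < y ->
  cpow (x * y) s = (cpow x s * cpow y s)%C.
Proof.
move=> hx hy; rewrite /cpow ln_mult //.
apply injective_projections; rewrite /= !Rmult_plus_distr_l exp_plus ?cos_plus ?sin_plus; ring.
Qed.

Lemma Cmod_cpow (x : R) (s : C) : Cmod (cpow x s) = exp (Re s * ln x).
Proof.
rewrite /cpow /Cmod /=.
have e0 := exp_pos (Re s * ln x).
have h2 := sin2_cos2 (Im s * ln x); rewrite /Rsqr in h2.
apply: sqrt_lem_1; try lra.
- nra.
- simpl; nra.
Qed.

Lemma cpow_1 (s : C) : cpow 1 s = 1%C.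
Proof.
rewrite /cpow ln_1 !Rmult_0_r exp_0 cos_0 sin_0.
apply injective_projections; rewrite /=; ring.
Qed.

Lemma cpow_shift (x k : R) (s : C) : 0 < x ->
  cpow x (- (s - RtoC k))%C = (RtoC (Rpower x k) * cpow x (- s))%C.
Proof.
move=> hx; rewrite /cpow /Rpower /Re /Im /=.
replace (- (s.1 + - k) * ln x) with (k * ln x + - s.1 * ln x) by ring.
replace (- (s.2 + - 0) * ln x) with (- s.2 * ln x) by ring.
rewrite exp_plus.
apply injective_projections; rewrite /=; ring.
Qed.

Lemma cpow_inv (x : R) (s : C) : (cpow x s * cpow x (- s))%C = 1%C.
Proof.
rewrite /cpow /=.
apply injective_projections; rewrite /=.
- have -> : - Re s * ln x = - (Re s * ln x) by ring.
  have -> : - Im s * ln x = - (Im s * ln x) by ring.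
  rewrite cos_neg sin_neg exp_Ropp.
  have := exp_pos (Re s * ln x) => h.
  have := sin2_cos2 (Im s * ln x); rewrite /Rsqr => h2.
  field_simplify; [ lra | lra].
- have -> : - Re s * ln x = - (Re s * ln x) by ring.
  have -> : - Im s * ln x = - (Im s * ln x) by ring.
  rewrite cos_neg sin_neg exp_Ropp.
  have := exp_pos (Re s * ln x) => h.
  field; lra.
Qed.

Lemma cpow_pow (x : R) (s : C) (j : nat) : 0 < x ->
  cpow (x ^ j) s = Cpow (cpow x s) j.
Proof.
move=> hx; elim: j => [|j IH] /=; first by rewrite cpow_1.
rewrite cpow_mul //; last by apply: pow_lt.
by rewrite IH.
Qed.

Definition cs (s : C) (n : nat) : C := if n == 0%N then RtoC 0 else cpow (INR n) (- s)%C.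
Definition dir (s : C) (c : nat -> R) (n : nat) : C := (RtoC (c n) * cs s n)%C.

Definition conv {K : Ring} (a b : nat -> K) (n : nat) : K :=
  sum_n (fun d => if d %| n then mult (a d) (b (n %/ d)) else zero) n.

Lemma conv_partial {K : Ring} (a b : nat -> K) : a 0%N = zero -> b 0%N = zero -> forall N,
  sum_n (conv a b) N = sum_n (fun d => mult (a d) (sum_n b (N %/ d))) N.
Proof.
move=> a0 b0; elim=> [|N IH].
  by rewrite !sum_O /conv sum_O /= a0 !mult_zero_l.
rewrite sum_Sn IH.
have E : forall d, (d <= N.+1)%coq_nat -> mult (a d) (sum_n b (N.+1 %/ d)) =
   plus (mult (a d) (sum_n b (N %/ d))) (if d %| N.+1 then mult (a d) (b (N.+1 %/ d)) else zero).
  move=> d _; case: d => [|d].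
    by rewrite a0 !mult_zero_l dvd0n /= plus_zero_r.
  rewrite divnS //; case: (boolP (d.+1 %| N.+1)) => hd /=.
    by rewrite add1n sum_Sn mult_distr_l.
  by rewrite add0n plus_zero_r.
rewrite (sum_n_ext_loc _ _ _ E) sum_n_plus sum_Sn.
by rewrite divn_small ?ltnSn // sum_O b0 mult_zero_r plus_zero_r.
Qed.

Lemma RtoC_sum_n (f : nat -> R) N :
  RtoC (sum_n f N) = @sum_n C_AbelianMonoid (fun i => RtoC (f i)) N.
Proof.
elim: N => [|N IH]; first by rewrite !sum_O.
rewrite !sum_Sn -IH; rewrite /plus /=; rewrite -RtoC_plus; done.
Qed.

Lemma sum_n_Cmult_r (g : nat -> C) (c : C) N :
  (@sum_n C_AbelianMonoid g N * c)%C = @sum_n C_AbelianMonoid (fun i => g i * c)%C N.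
Proof. symmetry; exact: (@sum_n_mult_r C_Ring c g N). Qed.

Lemma cs_mul (s : C) (d e : nat) : (0 < d)%N -> (0 < e)%N ->
  cs s (d * e) = (cs s d * cs s e)%C.
Proof.
move=> d0 e0; rewrite /cs muln_eq0 !eqn0Ngt d0 e0 /=.
rewrite -cpow_mul; last by apply: lt_0_INR; apply/ltP.
  by rewrite -mult_INR.
by apply: lt_0_INR; apply/ltP.
Qed.

Lemma conv_dir (s : C) (c1 c2 : nat -> R) n :
  @conv C_Ring (dir s c1) (dir s c2) n = dir s (@conv R_Ring c1 c2) n.
Proof.
case: n => [|n].
  rewrite /conv /dir !sum_O /= /cs /=.
  apply injective_projections; rewrite /=; ring.
rewrite /dir {2}/conv RtoC_sum_n sum_n_Cmult_r /conv.
apply: sum_n_ext_loc => d _.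
case: (boolP (d %| n.+1)) => hd; last first.
  by rewrite Cmult_0_l.
have d0 : (0 < d)%N by case: d hd => //; rewrite dvd0n.
have e0 : (0 < n.+1 %/ d)%N by rewrite divn_gt0 // dvdn_leq.
have -> : cs s n.+1 = (cs s d * cs s (n.+1 %/ d))%C.
  by rewrite -cs_mul // mulnC divnK.
change (mult (RtoC (c1 d) * cs s d) (RtoC (c2 (n.+1 %/ d)) * cs s (n.+1 %/ d)))%C with
  ((RtoC (c1 d) * cs s d) * (RtoC (c2 (n.+1 %/ d)) * cs s (n.+1 %/ d)))%C.
change (mult (c1 d) (c2 (n.+1 %/ d))) with (c1 d * c2 (n.+1 %/ d)).
rewrite RtoC_mult. match goal with |- ?a = ?b => change (@eq C a b) end. ring.
Qed.

Lemma sum_n_INR (P : pred nat) (F : nat -> nat) N :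
  sum_n (fun i => if P i then INR (F i) else 0) N = INR (\sum_(i < N.+1 | P i) F i).
Proof.
elim: N => [|N IH].
  rewrite sum_O big_mkcond big_ord_recr big_ord0 /= add0n.
  by case: (P 0%N).
rewrite sum_Sn IH [in RHS]big_mkcond big_ord_recr /= -big_mkcond plus_INR /plus /=.
by case: (P N.+1).
Qed.

Lemma sum_n_iota (f : nat -> R) N : sum_n f N = \big[Rplus/0]_(i <- iota 0 N.+1) f i.
Proof.
elim: N => [|N IH]; first by rewrite sum_O big_seq1.
have -> : N.+2 = (N.+1 + 1)%N by rewrite addn1.
by rewrite sum_Sn IH iotaD big_cat big_seq1 add0n.
Qed.

Definition one_c (m : nat) : R := 1.
Definition fcR (m : nat) : R := INR ((m == 1%N) + ppN m).
Definition ppc (k : R) (m : nat) : R := if prime m then Rpower (INR m) k else 0.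

Lemma R1 m : (0 < m)%N -> @conv R_Ring one_c fcR m = INR (Omega m) + 1.
Proof.
move=> m0; rewrite /conv.
transitivity (sum_n (fun d => if d %| m then INR ((m %/ d == 1%N) + ppN (m %/ d)) else 0) m).
  apply: sum_n_ext => d; case: ifP => _ //.
  by rewrite /mult /= /one_c /fcR Rmult_1_l.
by rewrite (sum_n_INR (fun d => d %| m)) sum_fcN // S_INR.
Qed.

Lemma R2 k n : (0 < n)%N ->
  @conv R_Ring (ppc k) (@conv R_Ring one_c fcR) n = INR (Omega n) * beta k n.
Proof.
move=> n0; rewrite /conv.
transitivity (sum_n (fun e => INR (Omega n) * (if e \in primes n then Rpower (INR e) k else 0)) n).
  apply: sum_n_ext_loc => e _.
  case: (boolP (e %| n)) => he.
    have e0 : (0 < e)%N by case: e he => //; rewrite dvd0n => /eqP E; move: n0; rewrite E.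
    have ne0 : (0 < n %/ e)%N by rewrite divn_gt0 // dvdn_leq.
    rewrite -/(conv one_c fcR (n %/ e)) R1 // /ppc mem_primes n0 he andbT.
    case: (boolP (prime e)) => pe.
      rewrite (Omega_prime_mul _ _ pe he n0) S_INR /mult /=; ring.
    rewrite /mult /=; ring.
  rewrite mem_primes (negbTE he) !andbF /zero /=; ring.
rewrite sum_n_mult_l /mult /=; congr (_ * _).
rewrite sum_n_iota /beta (perm_big _ (primes_perm _ _ n0 (leqnn n))) big_filter [RHS]big_mkcond.
by [].
Qed.

Notation CS := (@sum_n C_AbelianMonoid).

Lemma normC (x : C) : @norm C_AbsRing C_NormedModule x = Cmod x.
Proof. reflexivity. Qed.

Lemma C_series_of_lim (a : nat -> C) l :
  is_lim_seq (fun n => Cmod (CS a n - l)%C) 0 -> is_series a l.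
Proof.
move=> /is_lim_seq_Reals H; apply/filterlim_locally => eps.
case: (H eps (cond_pos eps)) => N HN; exists N => n hn.
apply: norm_compat1; rewrite normC.
have := HN n hn; rewrite /R_dist Rminus_0_r Rabs_pos_eq //; exact: Cmod_ge_0.
Qed.

Lemma C_lim_of_series (a : nat -> C) l :
  is_series a l -> is_lim_seq (fun n => Cmod (CS a n - l)%C) 0.
Proof.
move=> H; apply/is_lim_seq_Reals => e e0.
have nf := @norm_factor_gt_0 C_AbsRing C_NormedModule.
have ep : 0 < e / (@norm_factor C_AbsRing C_NormedModule) by apply: Rdiv_lt_0_compat.
case: (proj1 (filterlim_locally _ _) H (mkposreal _ ep)) => N HN; exists N => n hn.
have := norm_compat2 _ _ _ (HN n hn); rewrite normC /= => h.
rewrite /R_dist Rminus_0_r Rabs_pos_eq; last exact: Cmod_ge_0.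
move: h; set nfv := @norm_factor C_AbsRing C_NormedModule.
have -> : nfv * (e / nfv) = e by rewrite /nfv; field; apply: Rgt_not_eq; exact: nf.
by [].
Qed.

Section RealHelpers.

Lemma sum_n_m_nonneg (r : nat -> R) n m : (forall k, 0 <= r k) -> 0 <= sum_n_m r n m.
Proof.
move=> h; apply: Rle_trans (sum_n_m_le (fun _ => 0) r n m h).
by rewrite (sum_n_m_const_zero (G:=R_AbelianMonoid)); apply: Rle_refl.
Qed.

Lemma sum_n_nonneg (r : nat -> R) n : (forall k, 0 <= r k) -> 0 <= sum_n r n.
Proof. exact: sum_n_m_nonneg. Qed.

Lemma sum_n_split (r : nat -> R) Q M : (Q <= M)%coq_nat ->
  sum_n r M = sum_n r Q + sum_n_m r (S Q) M.
Proof.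
move=> h; rewrite (sum_n_m_sum_n (G:=R_AbelianGroup)) //.
rewrite /minus /plus /opp /=. have H : forall x y : R, x = y + (x + - y) by move=> *; ring. apply: H.
Qed.

Lemma sum_n_mono (r : nat -> R) n m : (forall k, 0 <= r k) -> (n <= m)%coq_nat ->
  sum_n r n <= sum_n r m.
Proof.
move=> h nm; rewrite (sum_n_split r _ _ nm).
have := sum_n_m_nonneg r (S n) m h; lra.
Qed.

Lemma Series_ge_sum (r : nat -> R) N : (forall k, 0 <= r k) -> ex_series r ->
  sum_n r N <= Series r.
Proof.
move=> h e.
have L : is_lim_seq (fun M => sum_n r (M + N)) (Series r).
  apply (is_lim_seq_incr_n (sum_n r) N (Series r)); exact: (Series_correct _ e).
have := is_lim_seq_le (fun _ => sum_n r N) (fun M => sum_n r (M + N)) (sum_n r N) (Series r).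
move=> H; apply: H => //.
  move=> M; apply: sum_n_mono => //; lia.
exact: is_lim_seq_const.
Qed.

Lemma Series_nonneg (r : nat -> R) : (forall k, 0 <= r k) -> ex_series r -> 0 <= Series r.
Proof.
move=> h e; apply: Rle_trans (Series_ge_sum r 0 h e).
exact: sum_n_nonneg.
Qed.

Lemma tail_le (r : nat -> R) Q M : (forall k, 0 <= r k) -> ex_series r ->
  sum_n_m r (S Q) M <= Series r - sum_n r Q.
Proof.
move=> h e.
case: (Compare_dec.le_lt_dec Q M) => QM.
  have := Series_ge_sum r M h e; rewrite (sum_n_split r _ _ QM); lra.
rewrite sum_n_m_zero; last lia.
have := Series_ge_sum r Q h e; rewrite /zero /=; lra.
Qed.

Lemma tail_nonneg (r : nat -> R) Q : (forall k, 0 <= r k) -> ex_series r ->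
  0 <= Series r - sum_n r Q.
Proof. move=> h e; have := Series_ge_sum r Q h e; lra. Qed.

Lemma tail_mono (r : nat -> R) Q Q' : (forall k, 0 <= r k) -> (Q <= Q')%coq_nat ->
  Series r - sum_n r Q' <= Series r - sum_n r Q.
Proof. move=> h q; have := sum_n_mono r _ _ h q; lra. Qed.

Lemma tail_lim (r : nat -> R) : ex_series r ->
  is_lim_seq (fun Q => Series r - sum_n r Q) 0.
Proof.
move=> e.
have L : is_lim_seq (sum_n r) (Series r) := Series_correct _ e.
have := is_lim_seq_minus' _ _ _ _ (is_lim_seq_const (Series r)) L.
by rewrite Rminus_eq_0.
Qed.

Lemma ex_series_bounded (r : nat -> R) M : (forall n, 0 <= r n) ->
  (forall N, sum_n r N <= M) -> ex_series r.
Proof.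
move=> h hb; apply: ex_series_Reals_1; apply: growing_cv.
  move=> n /=; have := h (S n); lra.
exists M => x [n ->]; rewrite -sum_n_Reals; exact: hb.
Qed.

End RealHelpers.

Definition zr (sg : R) (n : nat) : R := if n == 0%N then 0 else exp (- sg * ln (INR n)).

Lemma zr_nonneg sg n : 0 <= zr sg n.
Proof. rewrite /zr; case: (n == 0%N); [lra | apply: Rlt_le; exact: exp_pos]. Qed.

Lemma key_ineq t x : 0 < t -> 1 <= x ->
  exp (- (t + 1) * ln (x + 1)) <= (exp (- t * ln x) - exp (- t * ln (x + 1))) / t.
Proof.
move=> t0 x1.
have hx : 0 < x by lra.
have hy : 0 < x + 1 by lra.
set y := x + 1 in hy *.
set u := ln x; set v := ln y.
have eu : exp u = x by rewrite /u exp_ln.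
have ev : exp v = y by rewrite /v exp_ln.
have huv : u - v <= - / y.
  have := exp_ineq1_le (u - v).
  rewrite /Rminus exp_plus exp_Ropp eu ev.
  have -> : x * / y = 1 - / y by rewrite /y; field; lra.
  lra.
set A := exp (- t * v).
have A0 : 0 < A by apply: exp_pos.
set B := exp (- t * (u - v)).
have hB : 1 + (- t * (u - v)) <= B by apply: exp_ineq1_le.
have eA : exp (- t * u) = A * B.
  by rewrite /A /B -exp_plus; f_equal; ring.
have eL : exp (- (t + 1) * v) = A / y.
  rewrite /A -ev /Rdiv -exp_Ropp -exp_plus; f_equal; ring.
rewrite eA eL.
have h1 : t * / y <= B - 1.
  have : t * / y <= - t * (u - v).
    have := Rmult_le_compat_l t (u - v) (- / y) (Rlt_le _ _ t0) huv; lra.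
  lra.
apply (Rmult_le_reg_l t) => //.
have -> : t * ((A * B - A) / t) = A * (B - 1) by field; lra.
have -> : t * (A / y) = A * (t * / y) by field; lra.
apply: Rmult_le_compat_l; lra.
Qed.

Lemma zeta_partial sg N : 1 < sg -> (1 <= N)%coq_nat ->
  sum_n (zr sg) N <= 1 + (1 - exp (- (sg - 1) * ln (INR N))) / (sg - 1).
Proof.
move=> s1; elim: N => [|N IH] hN; first lia.
case: N IH hN => [|N] IH hN.
  rewrite sum_Sn sum_O /zr /= /plus /= ln_1 Rmult_0_r exp_0. rewrite Rmult_0_r exp_0 Rminus_eq_0 /Rdiv Rmult_0_l; lra.
rewrite sum_Sn.
change (sum_n (zr sg) N.+1 + zr sg N.+2 <= 1 + (1 - exp (- (sg - 1) * ln (INR N.+2))) / (sg - 1)).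
have IH' := IH ltac:(lia).
have Z : zr sg N.+2 = exp (- sg * ln (INR N.+1 + 1)) by rewrite /zr -S_INR.
rewrite Z (S_INR N.+1).
have := key_ineq (sg - 1) (INR N.+1) ltac:(lra) ltac:(apply: (le_INR 1); lia).
have -> : sg - 1 + 1 = sg by ring.
lra.
Qed.

Lemma zeta_ex sg : 1 < sg -> ex_series (zr sg).
Proof.
move=> s1; apply: (ex_series_bounded _ (1 + 1 / (sg - 1))); first exact: zr_nonneg.
case=> [|N].
  rewrite sum_O /zr /=; have : 0 < 1 / (sg - 1) by apply: Rdiv_lt_0_compat; lra.
  lra.
apply: Rle_trans (zeta_partial sg N.+1 s1 ltac:(lia)) _.
have := exp_pos (- (sg - 1) * ln (INR N.+1)).
have : 0 < sg - 1 by lra.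
move=> h1 h2.
apply: Rplus_le_compat_l; rewrite /Rdiv; apply: Rmult_le_compat_r.
  by apply: Rlt_le; apply: Rinv_0_lt_compat.
lra.
Qed.

Lemma sum_n_m_le_loc (a b : nat -> R) n m :
  (forall k, (n <= k)%coq_nat -> (k <= m)%coq_nat -> a k <= b k) ->
  sum_n_m a n m <= sum_n_m b n m.
Proof.
move=> H.
rewrite (sum_n_m_ext_loc a (fun k => if (n <= k)%N && (k <= m)%N then a k else b k) n m).
  apply: sum_n_m_le => k; case: ifP => [/andP [h1 h2]|_]; last by apply: Rle_refl.
  by apply: H; apply/leP.
move=> k [h1 h2]; by rewrite (introT leP h1) (introT leP h2).
Qed.

Lemma Cmod_CSm_le (a : nat -> C) n m :
  Cmod (@sum_n_m C_AbelianMonoid a n m) <= sum_n_m (fun k => Cmod (a k)) n m.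
Proof. exact: (@norm_sum_n_m C_AbsRing C_NormedModule a n m). Qed.

Lemma Cmod_CS_le (a : nat -> C) N :
  Cmod (CS a N) <= sum_n (fun k => Cmod (a k)) N.
Proof. exact: Cmod_CSm_le. Qed.

Lemma CS_minus (f g : nat -> C) N : (CS f N - CS g N)%C = CS (fun i => f i - g i)%C N.
Proof.
elim: N => [|N IH]; first by rewrite !sum_O.
rewrite !sum_Sn -IH /plus /=.
match goal with |- ?a = ?b => change (@eq C a b) end. ring.
Qed.

Lemma conv_abs_le (a b : nat -> C) n :
  Cmod (@conv C_Ring a b n) <= @conv R_Ring (fun n => Cmod (a n)) (fun n => Cmod (b n)) n.
Proof.
rewrite /conv; apply: Rle_trans (Cmod_CS_le _ n) _.
apply: sum_n_m_le => d; case: ifP => _.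
  by rewrite /mult /= Cmod_mult; apply: Rle_refl.
by rewrite /zero /= Cmod_0; apply: Rle_refl.
Qed.

Lemma Cmod_cs s n : Cmod (cs s n) = zr (Re s) n.
Proof.
rewrite /cs /zr; case: (n == 0%N); first by rewrite Cmod_0.
by rewrite Cmod_cpow.
Qed.

Lemma dmult (a b : nat -> C) (A B : C) :
  a 0%N = RtoC 0 -> b 0%N = RtoC 0 -> is_series a A -> is_series b B ->
  ex_series (fun n => Cmod (a n)) -> ex_series (fun n => Cmod (b n)) ->
  is_series (@conv C_Ring a b) (A * B)%C /\ ex_series (fun n => Cmod (@conv C_Ring a b n)).
Proof.
move=> a0 b0 hA hB eA eB.
set ra := fun n => Cmod (a n).
set rb := fun n => Cmod (b n).
have ra0 : forall n, 0 <= ra n by move=> n; exact: Cmod_ge_0.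
have rb0 : forall n, 0 <= rb n by move=> n; exact: Cmod_ge_0.
have ra00 : ra 0%N = 0 by rewrite /ra a0 Cmod_0.
have rb00 : rb 0%N = 0 by rewrite /rb b0 Cmod_0.
set SA := Series ra.
set SB := Series rb.
have pA : forall N, sum_n ra N <= SA by move=> N; exact: Series_ge_sum.
have pB : forall N, sum_n rb N <= SB by move=> N; exact: Series_ge_sum.
have SA0 : 0 <= SA by exact: Series_nonneg.
have SB0 : 0 <= SB by exact: Series_nonneg.
split; last first.
  apply: (ex_series_bounded _ (SA * SB)); first by move=> n; exact: Cmod_ge_0.
  move=> N; apply: Rle_trans (sum_n_m_le _ _ 0 N (conv_abs_le a b)) _.
  change (sum_n (@conv R_Ring ra rb) N <= SA * SB).
  rewrite (@conv_partial R_Ring ra rb ra00 rb00 N).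
  apply: Rle_trans (_ : sum_n (fun d => ra d * SB) N <= _).
    apply: sum_n_m_le => d; apply: Rmult_le_compat_l => //.
  rewrite (@sum_n_mult_r R_Ring SB ra N).
  apply: Rmult_le_compat_r => //.
set E := fun N => sum_n (fun d => ra d * sum_n_m rb (S (N %/ d)) N) N.
have step1 : forall N, Cmod (CS (@conv C_Ring a b) N - A * B)%C <=
    E N + (Cmod (CS a N - A)%C * SB + Cmod A * Cmod (CS b N - B)%C).
  move=> N.
  have -> : CS (@conv C_Ring a b) N = CS (fun d => a d * CS b (N %/ d))%C N.
    exact: (@conv_partial C_Ring a b a0 b0 N).
  have E2 : (CS a N * CS b N)%C = CS (fun d => a d * CS b N)%C N by rewrite sum_n_Cmult_r.
  have -> : (CS (fun d => a d * CS b (N %/ d))%C N - A * B)%C =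
     ((CS (fun d => a d * CS b (N %/ d))%C N - CS (fun d => a d * CS b N)%C N) +
      ((CS a N - A) * CS b N + A * (CS b N - B)))%C.
    rewrite -E2; ring.
  apply: Rle_trans (Cmod_triangle _ _) _.
  apply: Rplus_le_compat.
    rewrite CS_minus; apply: Rle_trans (Cmod_CS_le _ N) _.
    apply: sum_n_m_le => d.
    have -> : (a d * CS b (N %/ d) - a d * CS b N)%C = (- (a d * (CS b N - CS b (N %/ d))))%C by ring.
    rewrite Cmod_opp Cmod_mult; apply: Rmult_le_compat_l; first exact: Cmod_ge_0.
    have -> : (CS b N - CS b (N %/ d))%C = @sum_n_m C_AbelianMonoid b (S (N %/ d)) N.
      rewrite (@sum_n_m_sum_n C_AbelianGroup) //; apply/leP; exact: leq_div.
    exact: Cmod_CSm_le.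
  apply: Rle_trans (Cmod_triangle _ _) _.
  rewrite !Cmod_mult; apply: Rplus_le_compat_r.
  apply: Rmult_le_compat_l; first exact: Cmod_ge_0.
  apply: Rle_trans (Cmod_CS_le _ N) _; exact: pB.
have E0 : forall N, 0 <= E N.
  move=> N; apply: sum_n_nonneg => d; apply: Rmult_le_pos => //.
  exact: sum_n_m_nonneg.
have step2 : is_lim_seq E 0.
  apply/is_lim_seq_Reals => eps ep.
  have LA := is_lim_seq_scal_l _ (SB + 1) _ (tail_lim ra eA).
  have LB := is_lim_seq_scal_l _ (SA + 1) _ (tail_lim rb eB).
  move/is_lim_seq_Reals: LA; rewrite /= Rmult_0_r => LA.
  move/is_lim_seq_Reals: LB; rewrite /= Rmult_0_r => LB.
  have e2 : 0 < eps / 2 by lra.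
  case: (LA _ e2) => M0 HM0.
  case: (LB _ e2) => K HK.
  set M := S M0.
  exists (M * K + M)%N => N hN.
  rewrite /R_dist Rminus_0_r Rabs_pos_eq; last exact: E0.
  have MN : (M <= N)%coq_nat by lia.
  have KN : (K <= N %/ M)%N by rewrite leq_divRL //; apply/leP; lia.
  rewrite /E (sum_n_split _ _ _ MN).
  have b1 : sum_n (fun d => ra d * sum_n_m rb (S (N %/ d)) N) M <= SA * (SB - sum_n rb (N %/ M)).
    apply: Rle_trans (_ : sum_n (fun d => ra d * (SB - sum_n rb (N %/ M))) M <= _).
      apply: sum_n_m_le_loc => d _ dM.
      case: d dM => [|d] dM; first by rewrite ra00 !Rmult_0_l; apply: Rle_refl.
      apply: Rmult_le_compat_l => //.
      apply: Rle_trans (tail_le rb _ _ rb0 eB) _.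
      apply: tail_mono => //; apply/leP; apply: leq_div2l => //; apply/leP; exact: dM.
    rewrite (@sum_n_mult_r R_Ring); apply: Rmult_le_compat_r; last exact: pA.
    exact: tail_nonneg.
  have b2 : sum_n_m (fun d => ra d * sum_n_m rb (S (N %/ d)) N) (S M) N <= SB * (SA - sum_n ra M).
    apply: Rle_trans (_ : sum_n_m (fun d => ra d * SB) (S M) N <= _).
      apply: sum_n_m_le => d; apply: Rmult_le_compat_l => //.
      apply: Rle_trans (tail_le rb _ _ rb0 eB) _.
      have := sum_n_nonneg rb (N %/ d) rb0; rewrite /SB; lra.
    rewrite (@sum_n_m_mult_r R_Ring) /mult /= (Rmult_comm SB); apply: Rmult_le_compat_r => //.
    exact: tail_le.
  have c1 := HK (N %/ M)%N ltac:(apply/leP; exact: KN).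
  have c2 := HM0 M ltac:(rewrite /M; lia).
  rewrite /R_dist Rminus_0_r in c1.
  rewrite /R_dist Rminus_0_r in c2.
  have t1 := tail_nonneg rb (N %/ M) rb0 eB.
  have t2 := tail_nonneg ra M ra0 eA.
  rewrite /SA /SB in b1 b2 SA0 SB0 c1 c2.
  rewrite Rabs_pos_eq in c1; last by apply: Rmult_le_pos; lra.
  rewrite Rabs_pos_eq in c2; last by apply: Rmult_le_pos; lra.
  have : Series ra * (Series rb - sum_n rb (N %/ M)) <= (Series ra + 1) * (Series rb - sum_n rb (N %/ M)) by nra.
  have : Series rb * (Series ra - sum_n ra M) <= (Series rb + 1) * (Series ra - sum_n ra M) by nra.
  lra.
apply: C_series_of_lim.
apply: (is_lim_seq_le_le (fun _ => 0) _
  (fun N => E N + (Cmod (CS a N - A)%C * SB + Cmod A * Cmod (CS b N - B)%C))).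
- move=> N; split; [exact: Cmod_ge_0 | exact: step1].
- exact: is_lim_seq_const.
have L1 := C_lim_of_series a A hA.
have L2 := C_lim_of_series b B hB.
have H := is_lim_seq_plus' _ _ _ _ step2 (is_lim_seq_plus' _ _ _ _
   (is_lim_seq_mult' _ _ _ _ L1 (is_lim_seq_const SB))
   (is_lim_seq_mult' _ _ _ _ (is_lim_seq_const (Cmod A)) L2)).
by rewrite Rmult_0_l Rmult_0_r !Rplus_0_r in H.
Qed.

Lemma is_series_CS (u : nat -> nat -> C) (U : nat -> C) :
  (forall p, is_series (u p) (U p)) ->
  forall Q, is_series (fun m => CS (fun p => u p m) Q) (CS U Q).
Proof.
move=> H; elim=> [|Q IH].
  rewrite sum_O; apply: is_series_ext (H 0%N) => m; by rewrite sum_O.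
rewrite sum_Sn; apply: is_series_ext (is_series_plus _ _ _ _ IH (H Q.+1)) => m.
by rewrite sum_Sn.
Qed.

Lemma lim_norm_le (c : nat -> C) (L : C) (Bd : R) : is_series c L ->
  (forall M, Cmod (CS c M) <= Bd) -> Cmod L <= Bd.
Proof.
move=> hc hb.
have L1 := C_lim_of_series c L hc.
have H := is_lim_seq_le (fun _ => Cmod L) (fun M => Bd + Cmod (CS c M - L)%C) (Cmod L) (Bd + 0)
  _ (is_lim_seq_const _) (is_lim_seq_plus' _ _ _ _ (is_lim_seq_const Bd) L1).
rewrite /= Rplus_0_r in H; apply: H => M.
have T := Cmod_triangle (L - CS c M) (CS c M).
have E1 : (L - CS c M + CS c M)%C = L by ring.
rewrite E1 in T.
have E2 : (L - CS c M)%C = (- (CS c M - L))%C by ring.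
rewrite E2 Cmod_opp in T.
have := hb M; lra.
Qed.

Lemma fub (u : nat -> nat -> C) (U : nat -> C) :
  (forall p m, (m < p)%N -> u p m = RtoC 0) ->
  (forall p, is_series (u p) (U p)) ->
  ex_series (fun m => sum_n (fun p => Cmod (u p m)) m) ->
  exists W, is_series (fun m => CS (fun p => u p m) m) W /\ is_series U W.
Proof.
move=> u0 hU er.
set r := fun m => sum_n (fun p => Cmod (u p m)) m.
have r0 : forall m, 0 <= r m by move=> m; apply: sum_n_nonneg => p; exact: Cmod_ge_0.
have : ex_series (fun m => CS (fun p => u p m) m).
  apply: (@ex_series_le C_AbsRing C_CompleteNormedModule _ r) => // m.
  rewrite normC; exact: Cmod_CS_le.
case=> W HW; exists W; split => //.
apply: C_series_of_lim.
have bound : forall Q, Cmod (CS U Q - W)%C <= Series r - sum_n r Q.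
  move=> Q.
  have hc := is_series_minus _ _ _ _ (is_series_CS u U hU Q) HW.
  apply: (lim_norm_le _ _ _ hc) => M.
  set g := fun m => if (m <= Q)%N then 0 else r m.
  apply: Rle_trans (Cmod_CS_le _ M) _.
  apply: Rle_trans (_ : sum_n g M <= _).
    apply: sum_n_m_le => m.
    rewrite /g; case: (leqP m Q) => mQ.
      have -> : (plus (CS (fun p => u p m) Q) (opp (CS (fun p => u p m) m))) =
          @sum_n_m C_AbelianMonoid (fun p => u p m) (S m) Q.
        by rewrite (@sum_n_m_sum_n C_AbelianGroup) //; apply/leP.
      rewrite (sum_n_m_ext_loc _ (fun _ => zero)); last first.
        move=> p [hp _]; apply: u0; apply/ltP; lia.
      rewrite sum_n_m_const_zero /zero /= Cmod_0; exact: Rle_refl.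
    have -> : (plus (CS (fun p => u p m) Q) (opp (CS (fun p => u p m) m))) =
        opp (@sum_n_m C_AbelianMonoid (fun p => u p m) (S Q) m).
      rewrite (@sum_n_m_sum_n C_AbelianGroup); last by apply/leP; apply: ltnW.
      change (minus ?x ?y) with (x - y)%C.
      change (plus ?x (opp ?y)) with (x - y)%C.
      match goal with |- ?a = ?b => change (@eq C a b) end. change (@opp C_AbelianGroup ?x) with (Copp x). change (@sum_n (AbelianGroup.AbelianMonoid C_AbelianGroup)) with (@sum_n C_AbelianMonoid). ring.
    change (Cmod (- @sum_n_m C_AbelianMonoid (fun p => u p m) (S Q) m)%C <= r m).
    rewrite Cmod_opp; apply: Rle_trans (Cmod_CSm_le _ _ _) _.
    rewrite /r (sum_n_split _ Q m); last by apply/leP; apply: ltnW.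
    have := sum_n_nonneg (fun p => Cmod (u p m)) Q (fun p => Cmod_ge_0 _); lra.
  case: (Compare_dec.le_lt_dec M Q) => MQ.
    rewrite (sum_n_ext_loc g (fun _ => 0)); last first.
      move=> m hm; rewrite /g; have -> : (m <= Q)%N by apply/leP; lia. by [].
    rewrite sum_n_const Rmult_0_r; exact: tail_nonneg.
  rewrite (sum_n_split _ Q M); last lia.
  rewrite (sum_n_ext_loc g (fun _ => 0)); last first.
    move=> m hm; rewrite /g; have -> : (m <= Q)%N by apply/leP; lia. by [].
  rewrite sum_n_const Rmult_0_r Rplus_0_l.
  rewrite (sum_n_m_ext_loc g r); last first.
    move=> m [hm _]; rewrite /g; have -> : (m <= Q)%N = false by apply/negbTE; rewrite -ltnNge; apply/ltP; lia. by [].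
  exact: tail_le.
apply: (is_lim_seq_le_le (fun _ => 0) _ (fun Q => Series r - sum_n r Q)).
- move=> Q; split; [exact: Cmod_ge_0 | exact: bound].
- exact: is_lim_seq_const.
exact: tail_lim.
Qed.

Lemma C_series_unique (a : nat -> C) (l1 l2 : C) : is_series a l1 -> is_series a l2 -> l1 = l2.
Proof.
move=> h1 h2.
have L1 := C_lim_of_series a l1 h1.
have L2 := C_lim_of_series a l2 h2.
have H := is_lim_seq_plus' _ _ _ _ L1 L2; rewrite Rplus_0_r in H.
have : Cmod (l1 - l2)%C <= 0.
  have := is_lim_seq_le (fun _ => Cmod (l1 - l2)%C) _ (Cmod (l1 - l2)%C) 0 _ (is_lim_seq_const _) H.
  apply => n.
  have -> : (l1 - l2)%C = (- (CS a n - l1) + (CS a n - l2))%C by ring.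
  apply: Rle_trans (Cmod_triangle _ _) _; rewrite Cmod_opp; apply: Rle_refl.
move=> h; have h0 : Cmod (l1 - l2)%C = 0 by have := Cmod_ge_0 (l1 - l2)%C; lra.
have := Cmod_eq_0 _ h0 => E.
have -> : l1 = ((l1 - l2) + l2)%C by ring.
by rewrite E Cplus_0_l.
Qed.

Lemma CS_point (M : nat) (c : C) n :
  CS (fun m => if m == M then c else RtoC 0) n = if (M <= n)%N then c else RtoC 0.
Proof.
elim: n => [|n IH].
  rewrite sum_O leqn0 eq_sym //.
rewrite sum_Sn IH /plus /=.
case: (eqVneq n.+1 M) => h.
  have -> : (M <= n)%N = false by apply/negbTE; lia.
  have -> : (M <= n.+1)%N by lia.
  by rewrite Cplus_0_l.
case: (boolP (M <= n)%N) => h2.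
  have -> : (M <= n.+1)%N by lia.
  by rewrite Cplus_0_r.
have -> : (M <= n.+1)%N = false by apply/negbTE; lia.
by rewrite Cplus_0_r.
Qed.

Lemma is_series_point (M : nat) (c : C) :
  is_series (fun m => if m == M then c else RtoC 0) c.
Proof.
apply: C_series_of_lim.
apply (is_lim_seq_incr_n _ M).
apply: is_lim_seq_ext (is_lim_seq_const 0) => n.
rewrite CS_point; have -> : (M <= n + M)%N by lia.
have -> : (c - c)%C = RtoC 0 by ring.
by rewrite Cmod_0.
Qed.

Lemma is_series_geomC (x : C) : Cmod x < 1 ->
  is_series (fun j => Cpow x (S j)) (x / (1 - x))%C.
Proof.
move=> hx.
have x1 : (1 - x)%C <> RtoC 0.
  move=> E.
  have Ex : x = RtoC 1.
    have -> : x = (1 - (1 - x))%C by ring.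
    rewrite E; ring.
  move: hx; rewrite Ex Cmod_1; lra.
have id : forall n, (CS (fun j => Cpow x (S j)) n * (1 - x))%C = (x - Cpow x (S (S n)))%C.
  elim=> [|n IH].
    rewrite sum_O /=; ring.
  rewrite sum_Sn.
  change ((CS (fun j => Cpow x (S j)) n + Cpow x (S (S n))) * (1 - x) = x - Cpow x (S (S (S n))))%C.
  have -> : ((CS (fun j => Cpow x (S j)) n + Cpow x (S (S n))) * (1 - x))%C =
     (CS (fun j => Cpow x (S j)) n * (1 - x) + Cpow x (S (S n)) * (1 - x))%C by ring.
  rewrite IH /=; ring.
apply: C_series_of_lim.
have E : forall n, Cmod (CS (fun j => Cpow x (S j)) n - x / (1 - x))%C =
   Cmod x ^ (S (S n)) / Cmod (1 - x)%C.
  move=> n.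
  have -> : @eq C (CS (fun j => Cpow x (S j)) n) ((x - Cpow x (S (S n))) / (1 - x))%C.
    have F : forall y : C, y = (y * (1 - x) / (1 - x))%C by move=> y; field; exact: x1.
    rewrite -id; apply: F.
  have -> : ((x - Cpow x (S (S n))) / (1 - x) - x / (1 - x))%C = (- (Cpow x (S (S n)) / (1 - x)))%C.
    field; exact: x1.
  by rewrite Cmod_opp Cmod_div // Cmod_pow.
apply: (is_lim_seq_ext (fun n => Cmod x ^ (S (S n)) / Cmod (1 - x)%C)); first by move=> n; rewrite E.
have G := is_lim_seq_geom (Cmod x) ltac:(rewrite Rabs_pos_eq //; exact: Cmod_ge_0).
have G2 := proj1 (is_lim_seq_incr_n _ 2 0) G.
have := is_lim_seq_scal_r _ (/ Cmod (1 - x)%C) _ G2.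
rewrite /= Rmult_0_l; apply: is_lim_seq_ext => n.
have -> : (n + 2)%coq_nat = S (S n) by lia.
by rewrite /Rdiv.
Qed.

Lemma at_most_one (f : nat -> bool) (z : R) N : 0 <= z ->
  (forall i j, f i -> f j -> i = j) -> sum_n (fun i => if f i then z else 0) N <= z.
Proof.
move=> z0 fu.
suff : (sum_n (fun i => if f i then z else 0) N = 0 /\ forall i, (i <= N)%N -> ~~ f i) \/
       (sum_n (fun i => if f i then z else 0) N = z /\ exists i, (i <= N)%N /\ f i).
  by case=> [[-> _]|[-> _]]; lra.
elim: N => [|N IH].
  rewrite sum_O; case: (boolP (f 0%N)) => h.
    by right; split => //; exists 0%N.
  left; split => // i; rewrite leqn0 => /eqP ->; exact: h.
rewrite sum_Sn; change (plus ?a ?b) with (a + b).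
case: IH => [[-> H]|[-> [i [hi fi]]]].
  case: (boolP (f N.+1)) => h.
    right; split; [lra | by exists N.+1].
  left; split; first lra.
  move=> i; rewrite leq_eqVlt => /orP [/eqP -> //|]; rewrite ltnS; exact: H.
case: (boolP (f N.+1)) => h.
  have := fu _ _ fi h; lia.
right; split; [lra | exists i; split => //; lia].
Qed.

Definition u2 (s : C) (p j m : nat) : C := if (m == p ^ j.+1)%N then cs s m else RtoC 0.
Definition u1 (s : C) (p m : nat) : C := if prime p then CS (fun j => u2 s p j m) m else RtoC 0.

Lemma CS_zero n : CS (fun _ => RtoC 0) n = RtoC 0.
Proof. exact: (@sum_n_m_const_zero C_AbelianMonoid 0 n). Qed.

Lemma INR_expn p n : INR (p ^ n)%N = INR p ^ n.
Proof. elim: n => [|n IH] //=; by rewrite expnS mult_INR IH. Qed.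

Lemma inner_bound s p m : prime p -> sum_n (fun j => Cmod (u2 s p j m)) m <= zr (Re s) m.
Proof.
move=> pp.
rewrite (sum_n_ext _ (fun j => if (m == p ^ j.+1)%N then zr (Re s) m else 0)); last first.
  by move=> j; rewrite /u2; case: ifP => _; [rewrite Cmod_cs | rewrite Cmod_0].
apply: at_most_one; first exact: zr_nonneg.
move=> i j /eqP -> /eqP; move/eqP; rewrite eqn_exp2l ?prime_gt1 // => /eqP; lia.
Qed.

Lemma u2_zero s p j m : prime p -> (m < j)%N -> u2 s p j m = RtoC 0.
Proof.
move=> pp mj; rewrite /u2; case: eqP => // E.
have := pow_gt p j pp; rewrite -E; lia.
Qed.

Lemma u1_zero s p m : (m < p)%N -> u1 s p m = RtoC 0.
Proof.
move=> mp; rewrite /u1; case: (boolP (prime p)) => // pp.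
rewrite (sum_n_ext _ (fun _ => RtoC 0)) ?CS_zero // => j.
rewrite /u2; case: eqP => // E.
have := pow_ge p j pp; rewrite -E; lia.
Qed.

Definition Fp (m p : nat) : bool := prime p && (0 < logn p m)%N && (m == p ^ logn p m)%N.

Lemma u1_F s p m : ~~ Fp m p -> u1 s p m = RtoC 0.
Proof.
rewrite /Fp /u1; case: (boolP (prime p)) => //= pp nF.
rewrite (sum_n_ext _ (fun _ => RtoC 0)) ?CS_zero // => j.
rewrite /u2; case: eqP => // E.
move/negP: nF; case; rewrite E pfactorK //; apply/andP; split => //.
Qed.

Lemma Fp_uniq m p q : Fp m p -> Fp m q -> p = q.
Proof.
rewrite /Fp => /andP [/andP [pp lp] /eqP ep] /andP [/andP [pq lq] /eqP eq].
have : (p %| q ^ logn q m)%N.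
  rewrite -eq {1}ep Euclid_dvdX // dvdnn; exact: lp.
rewrite Euclid_dvdX // dvdn_prime2 // => /andP [/eqP -> _] //.
Qed.

Lemma outer_bound s m : sum_n (fun p => Cmod (u1 s p m)) m <= zr (Re s) m.
Proof.
apply: Rle_trans (_ : sum_n (fun p => if Fp m p then zr (Re s) m else 0) m <= _).
  apply: sum_n_m_le => p; case: (boolP (Fp m p)) => h.
    move: (h); rewrite /Fp => /andP [/andP [pp _] _].
    rewrite /u1 pp; apply: Rle_trans (Cmod_CS_le _ m) _; exact: inner_bound.
  rewrite u1_F // Cmod_0; exact: Rle_refl.
apply: at_most_one; first exact: zr_nonneg.
exact: Fp_uniq.
Qed.

Lemma ex_series_dom (r : nat -> R) sg : 1 < sg -> (forall n, 0 <= r n) ->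
  (forall n, r n <= zr sg n) -> ex_series r.
Proof.
move=> s1 r0 rb.
apply: (@ex_series_le R_AbsRing R_CompleteNormedModule r (zr sg)); last exact: zeta_ex.
move=> n; change (Rabs (r n) <= zr sg n); rewrite Rabs_pos_eq //.
Qed.

Lemma is_series_zeroC : is_series (fun _ : nat => RtoC 0) (RtoC 0).
Proof.
apply: C_series_of_lim; apply: is_lim_seq_ext (is_lim_seq_const 0) => n.
rewrite CS_zero; have -> : (RtoC 0 - RtoC 0)%C = RtoC 0 by ring.
by rewrite Cmod_0.
Qed.

Lemma POmega_prime s p : prime p ->
  POmega_term s p = (RtoC 1 / (cpow (INR p) s - 1))%C.
Proof.
move=> pp; rewrite /POmega_term pp /Omega primes_prime // big_seq1 logn_prime // eqxx.
by [].
Qed.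

Lemma inner_series s p : 1 < Re s -> prime p ->
  is_series (fun m => CS (fun j => u2 s p j m) m) (POmega_term s p).
Proof.
move=> s1 pp.
have p0 : 0 < INR p by apply: lt_0_INR; apply/ltP; exact: prime_gt0.
have p1 : 1 < INR p by apply: (lt_INR 1); apply/ltP; exact: prime_gt1.
set x := cpow (INR p) (- s).
have hx : Cmod x < 1.
  rewrite /x Cmod_cpow -exp_0; apply: exp_increasing.
  have : 0 < ln (INR p) by rewrite -ln_1; apply: ln_increasing; lra.
  change (Re (- s)%C) with (- Re s); nra.
have hU : forall j, is_series (u2 s p j) (Cpow x (S j)).
  move=> j.
  have -> : Cpow x (S j) = cs s (p ^ j.+1)%N.
    rewrite /cs; have -> : (p ^ j.+1 == 0)%N = false.
      by apply/negbTE; rewrite -lt0n expn_gt0 prime_gt0.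
    by rewrite INR_expn cpow_pow.
  apply: is_series_ext (is_series_point (p ^ j.+1)%N _) => m; rewrite /u2; by case: eqP => [->|].
have er : ex_series (fun m => sum_n (fun j => Cmod (u2 s p j m)) m).
  apply: (ex_series_dom _ (Re s)) => // n.
    apply: sum_n_nonneg => j; exact: Cmod_ge_0.
  exact: inner_bound.
case: (fub (fun j m => u2 s p j m) (fun j => Cpow x (S j))
        (fun j m h => u2_zero s p j m pp h) hU er) => W [HW HU].
have := C_series_unique _ _ _ HU (is_series_geomC x hx) => EW.
rewrite POmega_prime //.
suff -> : (RtoC 1 / (cpow (INR p) s - 1))%C = W by exact: HW.
rewrite EW.
have hy : (cpow (INR p) s * x)%C = RtoC 1 by rewrite /x cpow_inv.
have x0 : x <> RtoC 0 by move=> E; move: hy; rewrite E Cmult_0_r => /RtoC_inj; lra.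
have y1 : (cpow (INR p) s - 1)%C <> RtoC 0.
  move=> E.
  have E1 : cpow (INR p) s = RtoC 1.
    have -> : cpow (INR p) s = (cpow (INR p) s - 1 + 1)%C by ring.
    rewrite E; ring.
  move: hy; rewrite E1 Cmult_1_l => Ex; move: hx; rewrite Ex Cmod_1; lra.
have x1 : (1 - x)%C <> RtoC 0.
  move=> E.
  have Ex : x = RtoC 1.
    have -> : x = (1 - (1 - x))%C by ring.
    rewrite E; ring.
  move: hx; rewrite Ex Cmod_1; lra.
have -> : cpow (INR p) s = (/ x)%C.
  have -> : cpow (INR p) s = (cpow (INR p) s * x * / x)%C by field.
  by rewrite hy Cmult_1_l.
field; split => //; split => //.
Qed.

Lemma ppN_identity s m : CS (fun p => u1 s p m) m = (RtoC (INR (ppN m)) * cs s m)%C.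
Proof.
rewrite /ppN -(sum_n_INR prime (fun p => \sum_(j < m.+1) nat_of_bool (m == p ^ j.+1)%N)).
rewrite RtoC_sum_n sum_n_Cmult_r; apply: sum_n_ext => p.
rewrite /u1; case: (boolP (prime p)) => pp; last by rewrite Cmult_0_l.
rewrite -(sum_n_INR (fun _ => true) (fun j => nat_of_bool (m == p ^ j.+1)%N)).
rewrite RtoC_sum_n sum_n_Cmult_r; apply: sum_n_ext => j.
rewrite /u2; case: (m == p ^ j.+1)%N => /=; [by rewrite Cmult_1_l | by rewrite Cmult_0_l].
Qed.

Lemma L2 s : 1 < Re s ->
  exists W, is_series (fun m => (RtoC (INR (ppN m)) * cs s m)%C) W /\ is_series (POmega_term s) W.
Proof.
move=> s1.
have hU : forall p, is_series (u1 s p) (POmega_term s p).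
  move=> p; case: (boolP (prime p)) => pp.
    apply: is_series_ext (inner_series s p s1 pp) => m; by rewrite /u1 pp.
  have -> : POmega_term s p = RtoC 0 by rewrite /POmega_term (negbTE pp).
  apply: is_series_ext is_series_zeroC => m; by rewrite /u1 (negbTE pp).
have er : ex_series (fun m => sum_n (fun p => Cmod (u1 s p m)) m).
  apply: (ex_series_dom _ (Re s)) => // n.
    apply: sum_n_nonneg => j; exact: Cmod_ge_0.
  exact: outer_bound.
case: (fub (u1 s) (POmega_term s) (fun p m h => u1_zero s p m h) hU er) => W [HW HU].
exists W; split => //.
apply: is_series_ext HW => m; exact: ppN_identity.
Qed.

Lemma conv_ext {K : Ring} (a b b' : nat -> K) n : (forall m, b m = b' m) -> conv a b n = conv a b' n.
Proof. move=> H; rewrite /conv; apply: sum_n_ext => d; by rewrite H. Qed.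

Lemma dir0 s c : dir s c 0%N = RtoC 0.
Proof. rewrite /dir /cs /=; ring. Qed.

Lemma ex_C_dom (a : nat -> C) (b : nat -> R) : (forall n, Cmod (a n) <= b n) -> ex_series b ->
  ex_series a.
Proof. move=> H e; apply: (@ex_series_le C_AbsRing C_CompleteNormedModule a b) => // n; rewrite normC; exact: H. Qed.

Lemma ex_R_dom (a : nat -> R) (b : nat -> R) : (forall n, 0 <= a n) -> (forall n, a n <= b n) -> ex_series b ->
  ex_series a.
Proof.
move=> h0 H e; apply: (@ex_series_le R_AbsRing R_CompleteNormedModule a b) => // n.
change (Rabs (a n) <= b n); rewrite Rabs_pos_eq //; exact: H.
Qed.

Lemma shift_series (a : nat -> C) (l : C) : a 0%N = RtoC 0 -> is_series a l ->
  is_series (fun n => a (S n)) l.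
Proof.
move=> a0 h; apply: is_series_incr_1.
by rewrite a0 plus_zero_r.
Qed.

Theorem theorem4p2 (k : R) (s : C) :
  (Rmax 1 (1 + k) < Re s)%R ->
  exists Z PP PO : C,
    is_series (zeta_term s) Z /\
    is_series (primezeta_term (s - RtoC k)%C) PP /\
    is_series (POmega_term s) PO /\
    is_series (lhs_term k s) (Z * PP * (PO + 1))%C.
Proof.
move=> hs.
have s1 : 1 < Re s by have := Rmax_l 1 (1 + k); lra.
have sk : 1 < Re s - k by have := Rmax_r 1 (1 + k); lra.
set z := dir s one_c.
have z0 : z 0%N = RtoC 0 by exact: dir0.
have zb : forall n, Cmod (z n) = zr (Re s) n.
  by move=> n; rewrite /z /dir Cmod_mult Cmod_R Rabs_R1 Rmult_1_l Cmod_cs.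
have ezr : ex_series (fun n => Cmod (z n)).
  apply: (ex_R_dom _ (zr (Re s))) => [n|n|]; [exact: Cmod_ge_0 | rewrite zb; exact: Rle_refl | exact: zeta_ex].
case: (ex_C_dom z (zr (Re s)) (fun n => Req_le _ _ (zb n)) (zeta_ex _ s1)) => Z HZ.
set pp := dir s (ppc k).
have pp0 : pp 0%N = RtoC 0 by exact: dir0.
have ppE : forall n, pp n = primezeta_term (s - RtoC k)%C n.
  move=> n; rewrite /pp /dir /ppc /primezeta_term.
  case: (boolP (prime n)) => pn; last by rewrite Cmult_0_l.
  have n0 : (n == 0%N) = false by apply/negbTE; rewrite -lt0n prime_gt0.
  rewrite /cs n0 cpow_shift //; apply: lt_0_INR; apply/ltP; exact: prime_gt0.
have ppb : forall n, Cmod (pp n) <= zr (Re s - k) n.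
  move=> n; rewrite ppE /primezeta_term; case: (boolP (prime n)) => pn.
    have n0 : (n == 0%N) = false by apply/negbTE; rewrite -lt0n prime_gt0.
    rewrite Cmod_cpow /zr n0; apply: Req_le; f_equal; rewrite /Re /=; ring.
  rewrite Cmod_0; exact: zr_nonneg.
have epp : ex_series (fun n => Cmod (pp n)).
  apply: (ex_R_dom _ (zr (Re s - k))) => [n|n|]; [exact: Cmod_ge_0 | exact: ppb | exact: zeta_ex].
case: (ex_C_dom pp (zr (Re s - k)) ppb (zeta_ex _ sk)) => PP HPP.
case: (L2 s s1) => W [HW HPO].
set f := dir s fcR.
have f0 : f 0%N = RtoC 0 by exact: dir0.
have fE : forall n, f n = plus (RtoC (INR (ppN n)) * cs s n)%C (if n == 1%N then RtoC 1 else RtoC 0).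
  move=> n; rewrite /f /dir /fcR plus_INR RtoC_plus /plus /=.
  case: (boolP (n == 1%N)) => h.
    rewrite (eqP h) /cs /= cpow_1; ring.
  rewrite /=; ring.
have HF : is_series f (W + 1)%C.
  apply: is_series_ext (is_series_plus _ _ _ _ HW (is_series_point 1%N (RtoC 1))) => n.
  by rewrite fE.
have fb : forall n, Cmod (f n) <= 2 * zr (Re s) n.
  move=> n; rewrite fE; apply: Rle_trans (Cmod_triangle _ _) _.
  have -> : 2 * zr (Re s) n = zr (Re s) n + zr (Re s) n by ring.
  apply: Rplus_le_compat.
    rewrite -ppN_identity; apply: Rle_trans (Cmod_CS_le _ n) _; exact: outer_bound.
  case: (boolP (n == 1%N)) => h.
    rewrite (eqP h) Cmod_1 /zr /= ln_1 Rmult_0_r exp_0; exact: Rle_refl.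
  rewrite Cmod_0; exact: zr_nonneg.
have ef : ex_series (fun n => Cmod (f n)).
  apply: (ex_R_dom _ (fun n => 2 * zr (Re s) n)) => [n|n|]; [exact: Cmod_ge_0 | exact: fb |].
  exact: (@ex_series_scal_l R_AbsRing R_NormedModule 2 (zr (Re s)) (zeta_ex _ s1)).
case: (dmult z f Z (W + 1)%C z0 f0 HZ HF ezr ef) => HG eg.
set g := @conv C_Ring z f.
have gE : forall n, g n = dir s (@conv R_Ring one_c fcR) n by move=> n; exact: conv_dir.
have g0 : g 0%N = RtoC 0 by rewrite gE dir0.
case: (dmult pp g PP (Z * (W + 1))%C pp0 g0 HPP HG epp eg) => HH _.
have hE : forall n, @conv C_Ring pp g n.+1 = lhs_term k s n.
  move=> n; rewrite (conv_ext _ _ _ _ gE) conv_dir /dir R2 //.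
have h0 : @conv C_Ring pp g 0%N = RtoC 0 by rewrite (conv_ext _ _ _ _ gE) conv_dir dir0.
exists Z, PP, W; split; [|split; [|split]].
- apply: is_series_ext (shift_series z Z z0 HZ) => n.
  by rewrite /z /dir /one_c /cs /= Cmult_1_l.
- by apply: is_series_ext HPP.
- exact: HPO.
have -> : (Z * PP * (W + 1))%C = (PP * (Z * (W + 1)))%C by ring.
apply: is_series_ext (shift_series _ _ h0 HH) => n; exact: hE.
Qed.
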